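(* Assume $\eta_1\le\frac{1}{4k(T_1+1)}$ and $0<r\le\frac{\eta_1}{200}$. With probability at least $1-4e^{-m/36}$ over the sample $S$, the following holds for every realization of the initialization: for all $0\le t\le T_1$ and all $i\in\mathcal{W}_0^+\cap\mathcal{A}^+$, (1) $o_1\cdot w_i^{(t)}\ge \frac{t\eta_1}{9}$; (2) $o_j\cdot w_i^{(t)}\le r$ for all $j\ne1$; and (3) $p_i^{(t)}(x)=o_1$ for every $x\in S_1^+$.
   Context: Fix $n\ge1$, $d\ge3$ and orthonormal $o_1,\dots,o_d\in\mathbb{R}^d$. Inputs are $x=(x[1],\dots,x[n])\in\mathbb{R}^{nd}$ with $x[j]\in\mathbb{R}^d$. The distribution $\mathcal{D}$ on $\mathbb{R}^{nd}\times\{\pm1\}$: $y$ uniform on $\{\pm1\}$; given $y=1$, an index $j_+$ uniform on $\{1,\dots,n\}$ is drawn, $x[j_+]=o_1$, and for $j\ne j_+$ independently $x[j]=o_{i_j}$, $i_j$ uniform on $\{3,\dots,d\}$; given $y=-1$, the same with $o_2$ instead of $o_1$. Network $N_{(W,a)}(x)=\sum_{i=1}^k a_i\max_j\sigma(w_i\cdot x[j])$, $\sigma(z)=\max\{0,z\}$, with $w_i$ the rows of $W\in\mathbb{R}^{k\times d}$. Loss $\ell(z)=\log(1+e^{-z})$. $S$ consists of $m$ i.i.d. samples from $\mathcal{D}$; $S_1$ is its first $\lceil m/2\rceil$ samples, $m_1=|S_1|$, $S_1^+=\{x:(x,1)\in S_1\}$, $S_1^-=\{x:(x,-1)\in S_1\}$,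 and $\mathcal{L}_1(W,a)=\frac{1}{m_1}\sum_{(x,y)\in S_1}\ell(yN_{(W,a)}(x))$. Initialization: each $w_i^{(0)}$ has norm $r$ (drawn uniformly on the radius-$r$ sphere) and each $a_i^{(0)}\in\{\pm1\}$. First-layer iterates: $W^{(t)}=W^{(t-1)}-\eta_1\nabla_W\mathcal{L}_1(W^{(t-1)},a^{(0)})$ for $t=1,\dots,T_1$, with $w_i^{(t)}$ the rows of $W^{(t)}$. Define $p_i^{(t)}(x)=x[j^*]$ where $j^*\in\arg\max_j w_i^{(t)}\cdot x[j]$, if $w_i^{(t)}\cdot x[j^*]>0$, and $p_i^{(t)}(x)=0$ otherwise; the gradient uses the convention $\frac{\partial}{\partial w_i}\max_j\sigma(w_i\cdot x[j])=p_i(x)$ (so $\max_j\sigma(w_i^{(t)}\cdot x[j])=w_i^{(t)}\cdot p_i^{(t)}(x)$). Sets: $\mathcal{A}^+=\{i:a_i^{(0)}=1\}$ and $\mathcal{W}_0^+=\{i:\arg\max_{l\in\{1,3,4,\dots,d\}}w_i^{(0)}\cdot o_l=1,\ w_i^{(0)}\cdot o_1>0\}$. *)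

(* Defs.v *)
From Stdlib Require Import Reals.
From mathcomp Require Import all_boot.
Open Scope R_scope.

(* Vectors of R^d are represented by functions nat -> R; only the
   coordinates 0..d-1 are ever used (through dotp d). *)
Definition vec := (nat -> R)%type.

Fixpoint sumR (f : nat -> R) (n : nat) : R :=
  match n with O => 0 | S p => sumR f p + f p end.

Definition dotp (d : nat) (v w : vec) : R := sumR (fun q => v q * w q) d.
Definition normv (d : nat) (v : vec) : R := sqrt (dotp d v v).
Definition zerov : vec := fun _ => 0.

(* o_1,...,o_d are o 0, ..., o (d-1) (0-based). *)
Definition orthonormal (d : nat) (o : nat -> vec) : Prop :=
  forall a b, (a < d)%N -> (b < d)%N ->
    dotp d (o a) (o b) = (if a == b then 1 else 0).

(* an input x = (x[1],...,x[n]) is a list of n vectors *)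
Definition relu (z : R) : R := Rmax 0 z.

Definition maxrelu (d : nat) (w : vec) (x : seq vec) : R :=
  foldr (fun v acc => Rmax (relu (dotp d w v)) acc) 0 x.

Fixpoint argmax_aux (d : nat) (w best : vec) (l : seq vec) : vec :=
  match l with
  | [::] => best
  | v :: l' => if Rlt_dec (dotp d w best) (dotp d w v)
               then argmax_aux d w v l' else argmax_aux d w best l'
  end.

Definition pvec (d : nat) (w : vec) (x : seq vec) : vec :=
  match x with
  | [::] => zerov
  | v :: l => let b := argmax_aux d w v l in
              if Rlt_dec 0 (dotp d w b) then b else zerov
  end.

Definition netN (d k : nat) (W : nat -> vec) (a : nat -> R) (x : seq vec) : R :=
  sumR (fun i => a i * maxrelu d (W i) x) k.

Definition loss (z : R) : R := ln (1 + exp (- z)).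
Definition dloss (z : R) : R := - (exp (- z) / (1 + exp (- z))).

(* gradient of L_1 w.r.t. w_i, with the convention d/dw max_j sigma = p_i(x);
   S1 is a list of (x, y) pairs, m_1 = size S1 *)
Definition gradw (d k : nat) (S1 : seq (seq vec * R)) (W : nat -> vec)
  (a : nat -> R) (i : nat) : vec :=
  fun q => / INR (size S1) *
     foldr (fun s acc => dloss (s.2 * netN d k W a s.1) * s.2 * a i
                          * pvec d (W i) s.1 q + acc) 0 S1.

Fixpoint gd (d k : nat) (S1 : seq (seq vec * R)) (a : nat -> R) (eta : R)
  (W0 : nat -> vec) (t : nat) : nat -> vec :=
  match t with
  | O => W0
  | S t' => let W := gd d k S1 a eta W0 t' in
            fun i q => W i q - eta * gradw d k S1 W a i q
  end.

(* One draw from D: (b, j_+, c) uniform; y = 1 iff b; x[j_+] = o_1 or o_2;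
   x[j] = o_{3 + c j} (1-based) for j <> j_+ (c j_+ is unused). The uniform
   distribution on this finite type pushes forward exactly to D. *)
Definition outcome (n d : nat) : finType :=
  (bool * 'I_n * {ffun 'I_n -> 'I_(d - 2)})%type.

Definition decode (n d : nat) (o : nat -> vec) (u : outcome n d)
  : seq vec * R :=
  let: (b, jp, c) := u in
  ([seq (if j == jp then (if b then o 0%N else o 1%N) else o (2 + c j)%N)
     | j <- enum 'I_n], if b then 1 else -1).

(* m i.i.d. samples = uniform element of the product *)
Definition sample (n d m : nat) : finType := {ffun 'I_m -> outcome n d}.

Definition S1of (n d m : nat) (o : nat -> vec) (S : sample n d m)
  : seq (seq vec * R) :=
  [seq @decode n d o (S i) | i <- enum 'I_m & (nat_of_ord i < uphalf m)%N].

(* W_0^+ : argmax_{l in {1,3,...,d}} w.o_l is (uniquely) 1, and w.o_1 > 0 *)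
Definition inW0plus (d : nat) (o : nat -> vec) (W0 : nat -> vec) (i : nat) : Prop :=
  0 < dotp d (W0 i) (o 0%N) /\
  forall l, (2 <= l)%N -> (l < d)%N ->
    dotp d (W0 i) (o l) < dotp d (W0 i) (o 0%N).

(* Main.v *)
Require Import Defs.
From Stdlib Require Import Reals.
From mathcomp Require Import all_boot.
From Stdlib Require Import Lra.
From mathcomp Require Import zify.
Open Scope R_scope.

Lemma sumR_ext f g n : (forall q, f q = g q) -> sumR f n = sumR g n.
Proof. move=> H; elim: n => [|n IH] //=; by rewrite IH H. Qed.

Lemma sumR_add f g n : sumR (fun q => f q + g q) n = sumR f n + sumR g n.
Proof. elim: n => [|n IH] /=; [lra| rewrite IH; lra]. Qed.

Lemma sumR_scal c f n : sumR (fun q => c * f q) n = c * sumR f n.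
Proof. elim: n => [|n IH] /=; [lra| rewrite IH; lra]. Qed.

Lemma sumR_zero n : sumR (fun _ => 0) n = 0.
Proof. elim: n => [|n IH] /=; [lra| rewrite IH; lra]. Qed.

Lemma dotp_sym d u v : dotp d u v = dotp d v u.
Proof. rewrite /dotp; apply: sumR_ext => q; lra. Qed.

Lemma dotp_zero d u : dotp d u zerov = 0.
Proof. rewrite /dotp /zerov; rewrite -[RHS](sumR_zero d); apply: sumR_ext => q; lra. Qed.

Lemma dotp_self_ge0 d u : 0 <= dotp d u u.
Proof. rewrite /dotp; elim: d => [|d IH] /=; [lra| have := Rle_0_sqr (u d); rewrite /Rsqr; lra]. Qed.

Lemma dotp_foldr d (u : vec) (L : seq (seq vec * R)) (f : seq vec * R -> R)
  (g : seq vec * R -> vec) :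
  sumR (fun q => u q * foldr (fun s acc => f s * g s q + acc) 0 L) d =
  foldr (fun s acc => f s * dotp d u (g s) + acc) 0 L.
Proof.
elim: L => [|s L IH] /=.
  rewrite -[RHS](sumR_zero d); apply: sumR_ext => q; lra.
rewrite -IH /dotp -sumR_scal -sumR_add; apply: sumR_ext => q; lra.
Qed.

Lemma dotp_aff d (u v F : vec) e c :
  sumR (fun q => u q * (v q - e * (c * F q))) d =
  dotp d u v - e * (c * sumR (fun q => u q * F q) d).
Proof. rewrite /dotp; elim: d => [|d IH] /=; [ring| rewrite IH; ring]. Qed.

Lemma dotp_gd_step d k S1 a eta W0 t u i :
  dotp d u (gd d k S1 a eta W0 t.+1 i) =
  dotp d u (gd d k S1 a eta W0 t i) - eta * (/ INR (size S1) *
    foldr (fun s acc => dloss (s.2 * netN d k (gd d k S1 a eta W0 t) a s.1) * s.2 * a i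
       * dotp d u (pvec d (gd d k S1 a eta W0 t i) s.1) + acc) 0 S1).
Proof.
set W := gd d k S1 a eta W0 t.
rewrite -(dotp_foldr d u S1 (fun s => dloss (s.2 * netN d k W a s.1) * s.2 * a i)
  (fun s => pvec d (W i) s.1)).
rewrite /= /gradw -/W {1}/dotp.
exact: dotp_aff.
Qed.

Lemma argmax_spec d w best l :
  List.In (argmax_aux d w best l) (best :: l) /\
  forall v, List.In v (best :: l) -> dotp d w v <= dotp d w (argmax_aux d w best l).
Proof.
elim: l best => [|v l IH] best /=.
  split; [by left | move=> v [<-|[]]; lra].
case: Rlt_dec => h /=.
- have [h1 h2] := IH v; split.
    case: h1 => [<-|h1]; [by right; left| by right; right].
  move=> u [<-|[<-|hu]].
  + have := h2 v (or_introl erefl); lra.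
  + exact: h2 (or_introl erefl).
  + exact: h2 (or_intror hu).
- have [h1 h2] := IH best; split.
    case: h1 => [<-|h1]; [by left| by right; right].
  move=> u [<-|[<-|hu]].
  + exact: h2 (or_introl erefl).
  + have := h2 best (or_introl erefl); lra.
  + exact: h2 (or_intror hu).
Qed.

Lemma pvec_cases d w x :
  (pvec d w x = zerov /\ forall v, List.In v x -> dotp d w v <= 0) \/
  (List.In (pvec d w x) x /\ forall v, List.In v x -> dotp d w v <= dotp d w (pvec d w x)).
Proof.
case: x => [|v l] /=.
  by left; split.
have [h1 h2] := argmax_spec d w v l.
case: Rlt_dec => h.
- by right; split.
- left; split => // u hu; have := h2 u hu; lra.
Qed.

Definition ispos (s : seq vec * R) : bool := if Req_dec_T s.2 1 then true else false.

Definition classP d (o : nat -> vec) (s : seq vec * R) : Prop :=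
  (s.2 = 1 /\ List.In (o 0%N) s.1 /\
     forall v, List.In v s.1 -> v = o 0%N \/ exists j, (2 <= j)%N /\ (j < d)%N /\ v = o j) \/
  (s.2 = -1 /\ forall v, List.In v s.1 -> exists j, (1 <= j)%N /\ (j < d)%N /\ v = o j).

Lemma classP_entries d o s : classP d o s -> (0 < d)%N ->
  forall v, List.In v s.1 -> exists j, (j < d)%N /\ v = o j.
Proof.
move=> [[_ [_ h]]|[_ h]] hd v hv.
- case: (h v hv) => [->|[j [_ [hj ->]]]]; [by exists 0%N | by exists j].
- case: (h v hv) => [j [_ [hj ->]]]; by exists j.
Qed.

Lemma ortho_same d o a : orthonormal d o -> (a < d)%N -> dotp d (o a) (o a) = 1.
Proof. move=> ho ha; by rewrite ho // eqxx. Qed.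

Lemma ortho_diff d o a b : orthonormal d o -> (a < d)%N -> (b < d)%N -> a <> b ->
  dotp d (o a) (o b) = 0.
Proof. move=> ho ha hb hab; rewrite ho //; case: eqP => //. Qed.

Lemma ortho_01 d o a b : orthonormal d o -> (a < d)%N -> (b < d)%N ->
  0 <= dotp d (o a) (o b) <= 1.
Proof. move=> ho ha hb; rewrite ho //; case: eqP => _; lra. Qed.

Lemma dotp_o_pvec d o s j w : orthonormal d o -> classP d o s -> (j < d)%N ->
  0 <= dotp d (o j) (pvec d w s.1) <= 1.
Proof.
move=> ho hc hj.
have hd : (0 < d)%N by apply: leq_ltn_trans hj.
case: (pvec_cases d w s.1) => [[-> _]|[hin _]].
  rewrite dotp_zero; lra.
have [j' [hj' ->]] := classP_entries _ _ _ hc hd _ hin.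
exact: ortho_01.
Qed.

Lemma dloss_bounds z : -1 <= dloss z <= 0.
Proof.
rewrite /dloss; have he := exp_pos (- z).
have h1 : 0 <= exp (- z) / (1 + exp (- z)).
  apply: Rmult_le_pos; [lra| left; apply: Rinv_0_lt_compat; lra].
have h2 : exp (- z) / (1 + exp (- z)) <= 1.
  apply (Rmult_le_reg_r (1 + exp (- z))); first lra.
  field_simplify; lra.
lra.
Qed.

Lemma dloss_small z : z <= 1/4 -> dloss z <= -3/7.
Proof.
move=> hz; rewrite /dloss.
have he : 3/4 <= exp (- z).
  case: (Req_dec z 0) => [->|hz0].
    rewrite Ropp_0 exp_0; lra.
  have := exp_ineq1 (- z) ltac:(lra); lra.
have h2 : 3/7 <= exp (- z) / (1 + exp (- z)).
  apply (Rmult_le_reg_r (1 + exp (- z))); first lra.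
  field_simplify; lra.
lra.
Qed.

Lemma foldr_abs (L : seq (seq vec * R)) (F : seq vec * R -> R) :
  (forall s, List.In s L -> Rabs (F s) <= 1) ->
  Rabs (foldr (fun s acc => F s + acc) 0 L) <= INR (size L).
Proof.
elim: L => [|s L IH] h.
  rewrite /= Rabs_R0; lra.
rewrite [size _]/= S_INR [foldr _ _ _]/=.
have h1 := h s (or_introl erefl).
have h2 := IH (fun s' hs' => h s' (or_intror hs')).
have := Rabs_triang (F s) (foldr (fun s0 acc => F s0 + acc) 0 L); lra.
Qed.

Lemma foldr_ge0 (L : seq (seq vec * R)) (F : seq vec * R -> R) :
  (forall s, List.In s L -> 0 <= F s) ->
  0 <= foldr (fun s acc => F s + acc) 0 L.
Proof.
elim: L => [|s L IH] h /=; first lra.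
have h1 := h s (or_introl erefl).
have h2 := IH (fun s' hs' => h s' (or_intror hs')); lra.
Qed.

Lemma foldr_le_cnt (L : seq (seq vec * R)) (F : seq vec * R -> R) c :
  (forall s, List.In s L -> F s <= if ispos s then - c else 0) ->
  foldr (fun s acc => F s + acc) 0 L <= - c * INR (count ispos L).
Proof.
elim: L => [|s L IH] h; first by rewrite /=; lra.
have h1 := h s (or_introl erefl).
have h2 := IH (fun s' hs' => h s' (or_intror hs')).
rewrite [foldr _ _ _]/= [count _ _]/=.
move: h1; case: (ispos s) => h1.
  rewrite add1n S_INR; lra.
rewrite add0n; lra.
Qed.

Lemma sq_expand d (u w : vec) c :
  sumR (fun q => (w q - c * u q) * (w q - c * u q)) d =
    dotp d w w - 2 * c * dotp d u w + c * c * dotp d u u.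
Proof. rewrite /dotp; elim: d => [|d IH] /=; [ring| rewrite IH; ring]. Qed.

Lemma sq_pos d (u w : vec) c :
  0 <= sumR (fun q => (w q - c * u q) * (w q - c * u q)) d.
Proof.
elim: d => [|d IH] /=; first lra.
have := Rle_0_sqr (w d - c * u d); rewrite /Rsqr; lra.
Qed.

Lemma cs_unit d (u w : vec) r : dotp d u u = 1 -> 0 < r -> normv d w = r ->
  Rabs (dotp d u w) <= r.
Proof.
move=> hu hr hw.
have hww : dotp d w w = r * r.
  rewrite -hw /normv sqrt_sqrt //; exact: dotp_self_ge0.
have hpos := sq_pos d u w (dotp d u w).
rewrite sq_expand hww hu in hpos.
apply: Rabs_le; split; nra.
Qed.

Lemma maxrelu_bound d w x B : 0 <= B ->
  (forall v, List.In v x -> dotp d w v <= B) -> maxrelu d w x <= B.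
Proof.
move=> hB; elim: x => [|v x IH] h /=; first lra.
apply: Rmax_lub.
  rewrite /relu; apply: Rmax_lub; first lra.
  exact: h v (or_introl erefl).
exact: IH (fun v' hv' => h v' (or_intror hv')).
Qed.

Lemma maxrelu_ge0 d w x : 0 <= maxrelu d w x.
Proof.
case: x => [|v x] /=; first lra.
apply: Rle_trans (Rmax_l _ _); rewrite /relu; exact: Rmax_l.
Qed.

Lemma netN_bound d k W a x B :
  (forall i, (i < k)%N -> a i = 1 \/ a i = -1) ->
  (forall i, (i < k)%N -> maxrelu d (W i) x <= B) ->
  netN d k W a x <= INR k * B.
Proof.
rewrite /netN; elim: k => [|k IH] ha hm; first by rewrite /=; lra.
rewrite S_INR [sumR _ _]/=.
have h1 := IH (fun i hi => ha i (leqW hi)) (fun i hi => hm i (leqW hi)).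
have h2 := hm k (ltnSn k).
have h3 := maxrelu_ge0 d (W k) x.
case: (ha k (ltnSn k)) => ->; lra.
Qed.

Lemma abs_bounds x b : Rabs x <= b -> - b <= x <= b.
Proof. unfold Rabs; destruct (Rcase_abs x); lra. Qed.

Lemma INR_muln a b : INR (a * b)%N = INR a * INR b.
Proof. by rewrite -multE mult_INR. Qed.

Lemma INR_leq a b : (a <= b)%N -> INR a <= INR b.
Proof. move=> h; apply: le_INR; exact/leP. Qed.

Lemma boundA d k S1 a eta W0 (o : nat -> vec) r :
  orthonormal d o -> (0 < d)%N -> 0 <= eta ->
  (forall s, List.In s S1 -> classP d o s) -> (0 < size S1)%N ->
  (forall i, (i < k)%N -> a i = 1 \/ a i = -1) ->
  (forall i j, (i < k)%N -> (j < d)%N -> Rabs (dotp d (o j) (W0 i)) <= r) ->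
  forall t i j, (i < k)%N -> (j < d)%N ->
    Rabs (dotp d (o j) (gd d k S1 a eta W0 t i)) <= r + INR t * eta.
Proof.
move=> ho hd he hcl hM ha h0; elim=> [|t IH] i j hi hj.
  rewrite /= Rmult_0_l Rplus_0_r; exact: h0.
rewrite dotp_gd_step S_INR.
set D := foldr _ 0 S1.
have hD : Rabs D <= INR (size S1).
  apply: foldr_abs => s hs.
  rewrite !Rabs_mult.
  have [hd1 hd2] := dloss_bounds (s.2 * netN d k (gd d k S1 a eta W0 t) a s.1).
  have hdl : Rabs (dloss (s.2 * netN d k (gd d k S1 a eta W0 t) a s.1)) <= 1.
    apply: Rabs_le; lra.
  have hs2 : Rabs s.2 = 1.
    case: (hcl s hs) => [[-> _]|[-> _]]; rewrite ?Rabs_Ropp Rabs_R1 //.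
  have ha1 : Rabs (a i) = 1 by case: (ha i hi) => ->; rewrite ?Rabs_Ropp Rabs_R1.
  have [hp1 hp2] := dotp_o_pvec d o s j (gd d k S1 a eta W0 t i) ho (hcl s hs) hj.
  rewrite hs2 ha1 (Rabs_pos_eq (dotp _ _ _)) //.
  have := Rabs_pos (dloss (s.2 * netN d k (gd d k S1 a eta W0 t) a s.1)); nra.
have hM' : 0 < INR (size S1) by apply: lt_0_INR; apply/ltP.
have hX : Rabs (/ INR (size S1) * D) <= 1.
  rewrite Rabs_mult Rabs_inv (Rabs_pos_eq (INR _)); last lra.
  apply: (Rmult_le_reg_l (INR (size S1))) => //.
  rewrite -Rmult_assoc Rinv_r; lra.
have [x1 x2] := abs_bounds _ _ hX.
have [y1 y2] := abs_bounds _ _ (IH i j hi hj).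
apply: Rabs_le; split; nra.
Qed.

Lemma ispos_true s : ispos s -> s.2 = 1.
Proof. rewrite /ispos; by case: Req_dec_T. Qed.

Lemma ispos_false s : ~~ ispos s -> s.2 <> 1.
Proof. rewrite /ispos; by case: Req_dec_T. Qed.

Lemma pvec_pos d (o : nat -> vec) w s :
  s.2 = 1 -> classP d o s -> 0 < dotp d w (o 0%N) ->
  (forall j, (2 <= j)%N -> (j < d)%N -> dotp d w (o j) < dotp d w (o 0%N)) ->
  pvec d w s.1 = o 0%N.
Proof.
move=> hs [[_ [hin hv]]|[hneg _]]; last by rewrite hs in hneg; lra.
move=> hp hlt.
case: (pvec_cases d w s.1) => [[_ h]|[hp1 hp2]].
  have := h _ hin; lra.
case: (hv _ hp1) => [//|[j [hj1 [hj2 hj]]]].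
have := hp2 _ hin; rewrite hj; have := hlt j hj1 hj2; lra.
Qed.

Lemma boundB d k T1 S1 a eta W0 (o : nat -> vec) r i :
  orthonormal d o -> (3 <= d)%N -> 0 < eta ->
  (forall s, List.In s S1 -> classP d o s) -> (0 < size S1)%N ->
  (2 * size S1 <= 7 * count ispos S1)%N ->
  (forall i, (i < k)%N -> a i = 1 \/ a i = -1) ->
  (forall i j, (i < k)%N -> (j < d)%N -> Rabs (dotp d (o j) (W0 i)) <= r) ->
  0 <= r ->
  INR k * (r + INR T1 * eta) <= 1/4 ->
  (i < k)%N -> inW0plus d o W0 i -> a i = 1 ->
  forall t, (t <= T1)%N ->
   dotp d (o 0%N) (W0 i) + INR t * eta / 9 <= dotp d (o 0%N) (gd d k S1 a eta W0 t i) /\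
   forall j, (1 <= j)%N -> (j < d)%N ->
     dotp d (o j) (gd d k S1 a eta W0 t i) <= dotp d (o j) (W0 i).
Proof.
move=> ho hd he hcl hM hcnt ha h0 hr0 hsmall hi [hw1 hw2] hai.
have hd0 : (0 < d)%N by apply: leq_trans hd.
have hd1 : (1 < d)%N by apply: leq_trans hd.
elim=> [|t IH] ht.
  rewrite /=; split; [lra| move=> *; lra].
have [h1 h2] := IH (ltnW ht).
have htT : INR t <= INR T1 by apply: INR_leq; exact: ltnW.
have hINRt := pos_INR t.
set Wt := gd d k S1 a eta W0 t.
have hpos0 : 0 < dotp d (Wt i) (o 0%N).
  rewrite dotp_sym; rewrite dotp_sym in hw1; rewrite /Wt; nra.
have hlt : forall j, (2 <= j)%N -> (j < d)%N -> dotp d (Wt i) (o j) < dotp d (Wt i) (o 0%N).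
  move=> j hj1 hj2; rewrite dotp_sym [dotp d (Wt i) (o 0%N)]dotp_sym.
  have := h2 j (leq_trans (isT : (1 <= 2)%N) hj1) hj2.
  have := hw2 j hj1 hj2; rewrite dotp_sym [dotp d (W0 i) (o 0%N)]dotp_sym.
  rewrite /Wt; nra.
have hp : forall s, List.In s S1 -> s.2 = 1 -> pvec d (Wt i) s.1 = o 0%N.
  move=> s hs hs2; exact: pvec_pos hs2 (hcl s hs) hpos0 hlt.
have hN : forall s, List.In s S1 -> netN d k Wt a s.1 <= 1/4.
  move=> s hs.
  apply: Rle_trans (_ : INR k * (r + INR t * eta) <= 1/4).
    apply: netN_bound => // i' hi'.
    apply: maxrelu_bound; first nra.
    move=> v hv.
    have [j' [hj' ->]] := classP_entries _ _ _ (hcl s hs) hd0 _ hv.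
    rewrite dotp_sym.
    have := boundA d k S1 a eta W0 o r ho hd0 (Rlt_le _ _ he) hcl hM ha h0 t i' j' hi' hj'.
    have := Rle_abs (dotp d (o j') (Wt i')); rewrite /Wt; lra.
  apply: Rle_trans hsmall.
  apply: Rmult_le_compat_l; first exact: pos_INR.
  nra.
have hM' : 0 < INR (size S1) by apply: lt_0_INR; apply/ltP.
have hc : 2 * INR (size S1) <= 7 * INR (count ispos S1).
  have := INR_leq _ _ hcnt; rewrite !INR_muln /=; lra.
split.
- rewrite dotp_gd_step -/Wt S_INR.
  set D := foldr _ 0 S1.
  have hD : D <= - (3/7) * INR (count ispos S1).
    apply: foldr_le_cnt => s hs.
    case hps: (ispos s).
    + have hs2 := ispos_true s (introT idP hps).
      rewrite hs2 hai hp // ortho_same // Rmult_1_l !Rmult_1_r.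
      apply: Rle_trans (dloss_small _ (hN s hs)) _; lra.
    + have hs2 := ispos_false s (negbT hps).
      have hz : dotp d (o 0%N) (pvec d (Wt i) s.1) = 0.
        case: (pvec_cases d (Wt i) s.1) => [[-> _]|[hin _]].
          exact: dotp_zero.
        case: (hcl s hs) => [[hh _]|[_ hneg]]; first by [].
        have [j' [hj1 [hj2 ->]]] := hneg _ hin.
        apply: ortho_diff => //; move=> e; rewrite -e in hj1; by [].
      rewrite hz; lra.
  have hX : / INR (size S1) * D <= - (1/9).
    have : D <= - (INR (size S1) / 9) by nra.
    move=> hD2.
    apply: Rle_trans (_ : / INR (size S1) * (- (INR (size S1) / 9)) <= _).
      apply: Rmult_le_compat_l => //; left; exact: Rinv_0_lt_compat.
    right; field; lra.
  rewrite /Wt in hX h1 *; nra.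
- move=> j hj1 hj2.
  rewrite dotp_gd_step -/Wt.
  set D := foldr _ 0 S1.
  have hD : 0 <= D.
    apply: foldr_ge0 => s hs.
    case: (hcl s hs) => [[hs2 _]|[hs2 _]].
      rewrite hp // ortho_diff //; first lra.
      by move=> e; rewrite e in hj1.
    rewrite hs2 hai.
    have [hp1 hp2] := dotp_o_pvec d o s j (Wt i) ho (hcl s hs) hj2.
    have [hd1' hd2'] := dloss_bounds (-1 * netN d k Wt a s.1); nra.
  have hX : 0 <= / INR (size S1) * D.
    apply: Rmult_le_pos => //; left; exact: Rinv_0_lt_compat.
  have := h2 j hj1 hj2; rewrite /Wt; nra.
Qed.

Lemma In_map_ex {A B : Type} (f : A -> B) (s : seq A) y :
  List.In y (map f s) -> exists x, y = f x.
Proof.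
elim: s => [|x s IH] //= [<-|h]; [by exists x| exact: IH].
Qed.

Lemma mem_In_map {A : eqType} {B : Type} (f : A -> B) (s : seq A) x :
  x \in s -> List.In (f x) (map f s).
Proof.
elim: s => [|y s IH] //=; rewrite in_cons => /orP [/eqP ->|h]; [by left| right; exact: IH].
Qed.

Lemma decode_class n d o (u : outcome n d) : (3 <= d)%N ->
  classP d o (decode n d o u).
Proof.
move=> hd; case: u => [[b jp] c] /=.
have hc : forall j, (2 <= 2 + c j)%N /\ (2 + c j < d)%N.
  move=> j; have := ltn_ord (c j); lia.
case: b.
- left; split => //; split.
    have := mem_In_map (fun j => if j == jp then o 0%N else o (2 + c j)%N)
      (enum 'I_n) jp (mem_enum _ _).
    by rewrite eqxx.
  move=> v hv; have [j ->] := In_map_ex _ _ _ hv; case: eqP => _; first by left.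
  right; exists (2 + c j)%N; have [h1 h2] := hc j; by [].
- right; split => //.
  move=> v hv; have [j ->] := In_map_ex _ _ _ hv; case: eqP => _.
    exists 1%N; split => //; split => //; lia.
  exists (2 + c j)%N; have [h1 h2] := hc j; split => //; lia.
Qed.

Lemma ispos_decode n d o (u : outcome n d) : ispos (decode n d o u) = u.1.1.
Proof.
case: u => [[b jp] c]; rewrite /ispos /=.
case: b; case: Req_dec_T => // h; lra.
Qed.

Definition Lidx (m : nat) : seq 'I_m := filter (fun i : 'I_m => (nat_of_ord i < uphalf m)%N) (enum 'I_m).

Lemma S1of_eq n d m o S :
  S1of n d m o S = map (fun i => decode n d o (S i)) (Lidx m).
Proof. by []. Qed.

Lemma count_iota_lt c m : (c <= m)%N -> count (fun x => x < c)%N (iota 0 m) = c.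
Proof.
move=> hcm; rewrite -(subnKC hcm) iotaD count_cat add0n.
rewrite (eq_in_count (a2 := predT)); last first.
  move=> x; rewrite mem_iota => /andP [_ h]; rewrite /=; lia.
rewrite count_predT size_iota.
rewrite (eq_in_count (a2 := pred0)); last first.
  move=> x; rewrite mem_iota => /andP [h _]; rewrite /=; lia.
by rewrite count_pred0 addn0.
Qed.

Lemma size_Lidx m : size (Lidx m) = uphalf m.
Proof.
rewrite /Lidx size_filter.
have -> : count (fun i : 'I_m => (i < uphalf m)%N) (enum 'I_m) =
  count (fun x => x < uphalf m)%N (map val (enum 'I_m)) by rewrite count_map.
rewrite val_enum_ord count_iota_lt //.
rewrite uphalf_half; have := odd_double_half m; case: (odd m) => /=; lia.
Qed.

Section NatPart.
Local Open Scope nat_scope.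

Lemma index_enum_ordE m : index_enum 'I_m = enum 'I_m.
Proof. by rewrite enumT /index_enum locked_withE. Qed.

Lemma prod_weight {I : Type} (x y : nat) (b : I -> bool) (s : seq I) :
  (\prod_(i <- s) (if b i then x else y)) * y ^ (count b s) =
  x ^ (count b s) * y ^ (size s).
Proof.
elim: s => [|i s IH]; first by rewrite big_nil.
rewrite big_cons /=.
move: IH; set P := \prod_(j <- s) _; set c := count b s => IH.
case: (b i) => /=.
- rewrite add1n !expnS.
  have -> : x * P * (y * y ^ c) = x * y * (P * y ^ c) by lia.
  rewrite IH; lia.
- rewrite add0n expnS.
  have -> : y * P * y ^ c = y * (P * y ^ c) by lia.
  rewrite IH; lia.
Qed.

Lemma pow_le_mono a b e : a <= b -> a ^ e <= b ^ e.
Proof. move=> hab; elim: e => // e IH; by rewrite !expnS leq_mul. Qed.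

Lemma bad_weight (a b : nat) c1 cp P : 0 < b -> a <= b ->
  P * (b ^ 7) ^ cp = (a ^ 7) ^ cp * (b ^ 7) ^ c1 ->
  7 * cp <= 2 * c1 -> (a ^ 2 * b ^ 5) ^ c1 <= P.
Proof.
move=> hb hab hP hle.
have [e he] : exists e, 2 * c1 = 7 * cp + e by exists (2 * c1 - 7 * cp); lia.
have h8 : 0 < (b ^ 7) ^ cp by rewrite !expn_gt0 hb.
rewrite -(leq_pmul2r h8) hP.
have E1 : (a ^ 2 * b ^ 5) ^ c1 * (b ^ 7) ^ cp =
    a ^ (7 * cp) * a ^ e * (b ^ (5 * c1) * b ^ (7 * cp)).
  rewrite expnMn -[(a ^ 2) ^ c1]expnM -[(b ^ 5) ^ c1]expnM -[(b ^ 7) ^ cp]expnM.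
  rewrite he (expnD a (7 * cp) e); lia.
have E2 : (a ^ 7) ^ cp * (b ^ 7) ^ c1 =
    a ^ (7 * cp) * (b ^ (5 * c1) * b ^ (7 * cp)) * b ^ e.
  rewrite -[(a ^ 7) ^ cp]expnM -[(b ^ 7) ^ c1]expnM.
  have -> : 7 * c1 = 5 * c1 + 7 * cp + e by lia.
  rewrite (expnD b (5 * c1 + 7 * cp) e) (expnD b (5 * c1) (7 * cp)); lia.
rewrite E1 E2.
move: (pow_le_mono a b e hab).
set A := a ^ (7 * cp); set B := (b ^ (5 * c1) * b ^ (7 * cp)).
set x := a ^ e; set y := b ^ e => hxy.
have -> : A * x * B = (A * B) * x by lia.
exact: leq_mul.
Qed.

Definition flipo {n d} (u : outcome n d) : outcome n d := (~~ u.1.1, u.1.2, u.2).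

Lemma flipo_inj n d : injective (@flipo n d).
Proof.
apply: (can_inj (g := flipo)) => [[[b j] c]] /=; by rewrite /flipo /= negbK.
Qed.

Lemma sum_flip n d (x y : nat) :
  2 * \sum_(u : outcome n d) (if u.1.1 then x else y) = (x + y) * #|{: outcome n d}|.
Proof.
rewrite mul2n -addnn {2}(reindex_inj (@flipo_inj n d)) -big_split /=.
rewrite (eq_bigr (fun _ => x + y)); last first.
  move=> [[b j] c] _ /=; case: b => /=; lia.
by rewrite sum_nat_const mulnC.
Qed.

Lemma prod_list_G {I : Type} (P : pred I) (Hs N Z : nat) (s : seq I) :
  2 * Hs = Z * N ->
  (\prod_(i <- s) (if P i then Hs else N)) * 2 ^ (count P s) =
  Z ^ (count P s) * N ^ (size s).
Proof.
move=> hH; elim: s => [|i s IH]; first by rewrite big_nil.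
rewrite big_cons /=.
move: IH; set Q := \prod_(j <- s) _; set c := count P s => IH.
case: (P i) => /=.
- rewrite add1n !expnS.
  have -> : Hs * Q * (2 * 2 ^ c) = (2 * Hs) * (Q * 2 ^ c) by lia.
  rewrite IH hH; lia.
- rewrite add0n expnS.
  have -> : N * Q * 2 ^ c = N * (Q * 2 ^ c) by lia.
  rewrite IH; lia.
Qed.

Lemma total_weight n d m (P : pred 'I_m) X Y :
  (\sum_(S : sample n d m) \prod_(i : 'I_m) (if P i then (if (S i).1.1 then X else Y) else 1))
  * 2 ^ (count P (enum 'I_m)) = (X + Y) ^ (count P (enum 'I_m)) * #|{: outcome n d}| ^ m.
Proof.
rewrite -(bigA_distr_bigA (fun (i : 'I_m) (u : outcome n d) =>
  if P i then (if u.1.1 then X else Y) else 1)) /=.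
rewrite (eq_bigr (fun i => if P i then \sum_(u : outcome n d) (if u.1.1 then X else Y)
                            else #|{: outcome n d}|)); last first.
  move=> i _; case: (P i) => //.
  by rewrite sum_nat_const muln1.
rewrite index_enum_ordE.
rewrite (prod_list_G P _ _ (X + Y)) ?size_enum_ord //.
exact: sum_flip.
Qed.

End NatPart.

Lemma INR_expn a b : INR (a ^ b)%N = INR a ^ b.
Proof. elim: b => [|b IH]; first by rewrite expn0 /=. by rewrite expnS INR_muln IH. Qed.

Lemma INR7 : INR 7 = 7. Proof. rewrite INR_IZR_INZ. reflexivity. Qed.
Lemma INR8 : INR 8 = 8. Proof. rewrite INR_IZR_INZ. reflexivity. Qed.
Lemma INR2 : INR 2 = 2. Proof. rewrite INR_IZR_INZ. reflexivity. Qed.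

Lemma INR_addn a b : INR (a + b)%N = INR a + INR b.
Proof. by rewrite -plusE plus_INR. Qed.

Lemma INR_pow_sum a b : INR (a ^ 7 + b ^ 7)%N = INR a ^ 7 + INR b ^ 7.
Proof. by rewrite INR_addn !INR_expn. Qed.

Lemma exp_le_mono x y : x <= y -> exp x <= exp y.
Proof. case=> h; [left; exact: exp_increasing| rewrite h; lra]. Qed.

Lemma exp_pow_nat x c : exp x ^ c = exp (INR c * x).
Proof.
elim: c => [|c IH]; first by rewrite /= Rmult_0_l exp_0.
rewrite S_INR /= IH -exp_plus; congr exp; ring.
Qed.

Lemma count_bad n d m (B : {set sample n d m}) (P : pred 'I_m) X Y Z :
  (forall S, S \in B -> (Z ^ (count P (enum 'I_m)) <=
     \prod_(i : 'I_m) (if P i then (if (S i).1.1 then X else Y) else 1))%N) ->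
  (#|B| * (Z * 2) ^ (count P (enum 'I_m)) <=
     (X + Y) ^ (count P (enum 'I_m)) * #|{: outcome n d}| ^ m)%N.
Proof.
move=> h.
rewrite -total_weight expnMn mulnA leq_mul2r; apply/orP; right.
rewrite -sum_nat_const.
apply: leq_trans (_ : (\sum_(S in B) \prod_(i : 'I_m)
   (if P i then (if (S i).1.1 then X else Y) else 1) <= _)%N).
  apply: leq_sum => S hS; exact: h.
rewrite [X in (_ <= X)%N](bigID (fun S => S \in B)) /=.
exact: leq_addr.
Qed.

Lemma bad_S n d m (S : sample n d m) :
  ~~ (2 * size (Lidx m) <= 7 * count (fun i => (S i).1.1) (Lidx m))%N ->
  ((7 ^ 2 * 8 ^ 5) ^ count (fun i : 'I_m => (nat_of_ord i < uphalf m)%N) (enum 'I_m) <=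
   \prod_(i : 'I_m) (if (nat_of_ord i < uphalf m)%N then
        (if (S i).1.1 then 7 ^ 7 else 8 ^ 7) else 1))%N.
Proof.
move=> hbad.
rewrite index_enum_ordE -big_mkcond -big_filter.
rewrite -size_filter.
apply: (bad_weight 7 8 (size (Lidx m)) (count (fun i => (S i).1.1) (Lidx m))) => //.
  exact: prod_weight.
lia.
Qed.

Theorem lemma5p3 (n d k m T1 : nat) (eta1 r : R) (o : nat -> vec)
  (hn : (1 <= n)%N) (hd : (3 <= d)%N) (hk : (1 <= k)%N)
  (ho : orthonormal d o)
  (heta : eta1 <= / (4 * INR k * (INR T1 + 1)))
  (hr0 : 0 < r) (hr : r <= eta1 / 200) :
  exists G : {set sample n d m},
    1 - 4 * exp (- INR m / 36) <= INR #|G| / INR #|[set: sample n d m]| /\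
    forall S, S \in G ->
    forall (W0 : nat -> vec) (a0 : nat -> R),
      (forall i, (i < k)%N -> normv d (W0 i) = r) ->
      (forall i, (i < k)%N -> a0 i = 1 \/ a0 i = -1) ->
      forall t i, (t <= T1)%N -> (i < k)%N ->
        inW0plus d o W0 i -> a0 i = 1 ->
        let W := gd d k (S1of n d m o S) a0 eta1 W0 t in
        INR t * eta1 / 9 <= dotp d (o 0%N) (W i) /\
        (forall j, (1 <= j)%N -> (j < d)%N -> dotp d (o j) (W i) <= r) /\
        (forall x y, List.In (x, y) (S1of n d m o S) -> y = 1 ->
           forall q, (q < d)%N -> pvec d (W i) x q = o 0%N q).
Proof.
have heta0 : 0 < eta1 by lra.
have hd0 : (0 < d)%N by lia.
case: (posnP m) => [hm0|hm].
  subst m; exists set0; split.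
    rewrite cards0 /=.
    have -> : - 0 / 36 = 0 by lra.
    rewrite exp_0 /Rdiv Rmult_0_l; lra.
  by move=> S; rewrite in_set0.
have hup : (0 < uphalf m)%N.
  rewrite uphalf_half; have := odd_double_half m; case: (odd m) => /=; lia.
have hm2 : (m <= 2 * uphalf m)%N.
  rewrite uphalf_half; have := odd_double_half m; case: (odd m) => /=; lia.
set G := [set S : sample n d m | (2 * size (Lidx m) <=
              7 * count (fun i => (S i).1.1) (Lidx m))%N].
exists G; split.
-
  set P := (fun i : 'I_m => (nat_of_ord i < uphalf m)%N).
  set c1 := count P (enum 'I_m).
  have hc1 : c1 = uphalf m by rewrite /c1 -size_filter -/(Lidx m) size_Lidx.
  have hnat : (#|~: G| * (7 ^ 2 * 8 ^ 5 * 2) ^ c1 <=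
      (7 ^ 7 + 8 ^ 7) ^ c1 * #|{: outcome n d}| ^ m)%N.
    apply: count_bad => S; rewrite in_setC inE => hb.
    exact: bad_S.
  have hall : #|[set: sample n d m]| = (#|{: outcome n d}| ^ m)%N.
    by rewrite cardsT card_ffun card_ord.
  have hC := cardsC G.
  rewrite -cardsT hall in hC.
  have hN : (0 < #|{: outcome n d}|)%N.
    have hd2 : (0 < d - 2)%N by lia.
    apply/card_gt0P.
    exists (true, Ordinal hn, [ffun _ => Ordinal hd2]); by [].
  have hNm : (0 < #|{: outcome n d}| ^ m)%N by rewrite expn_gt0 hN.
  rewrite hall.
  move: hnat; set KK := (7 ^ 2 * 8 ^ 5 * 2)%N; set AA := (7 ^ 7 + 8 ^ 7)%N => hnat.
  have hK : INR KK = 3211264.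
    rewrite /KK (INR_muln (7 ^ 2 * 8 ^ 5) 2) (INR_muln (7 ^ 2) (8 ^ 5)).
    rewrite (INR_expn 7 2) (INR_expn 8 5).
    rewrite INR7 INR8 INR2; ring.
  have hA : INR AA = 2920695.
    rewrite /AA (INR_pow_sum 7 8) INR7 INR8; ring.
  clearbody KK AA.
  have hR := INR_leq _ _ hnat.
  rewrite !INR_muln (INR_expn KK c1) (INR_expn AA c1) hK hA in hR.
  have hCR : INR #|G| + INR #|~: G| = INR (#|{: outcome n d}| ^ m).
    by rewrite -INR_addn hC.
  have hT : 0 < INR (#|{: outcome n d}| ^ m) by apply: lt_0_INR; apply/ltP.
  set T := INR (#|{: outcome n d}| ^ m) in hR hCR hT *.
  set g := INR #|G| in hCR *; set b := INR #|~: G| in hR hCR.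
  set rho := 2920695 / 3211264.
  have hrho : rho * 3211264 = 2920695 by rewrite /rho; field.
  have hKc : 0 < 3211264 ^ c1 by apply: pow_lt; lra.
  have hb : b <= rho ^ c1 * T.
    apply: (Rmult_le_reg_r (3211264 ^ c1)) => //.
    have -> : rho ^ c1 * T * 3211264 ^ c1 = (rho * 3211264) ^ c1 * T
      by rewrite Rpow_mult_distr; ring.
    rewrite hrho; lra.
  have hrhoe : rho ^ c1 <= exp (- INR m / 36).
    apply: Rle_trans (_ : exp (- (1/18)) ^ c1 <= _).
      apply: pow_incr; split; first by rewrite /rho; lra.
      have := exp_ineq1_le (- (1/18)); rewrite /rho; lra.
    rewrite exp_pow_nat; apply: exp_le_mono.
    have := INR_leq _ _ hm2; rewrite INR_muln -hc1.
    have -> : INR 2 = 2 by rewrite /=; lra.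
    lra.
  have he := exp_pos (- INR m / 36).
  have hg : (1 - rho ^ c1) * T <= g by lra.
  apply: Rle_trans (_ : 1 - rho ^ c1 <= _); first lra.
  apply: (Rmult_le_reg_r T) => //.
  rewrite /Rdiv Rmult_assoc Rinv_l; lra.
-
  move=> S hS W0 a0 hW0 ha0 t i ht hi hwi hai W.
  rewrite inE in hS.
  set S1 := S1of n d m o S in W *.
  have hcl : forall s, List.In s S1 -> classP d o s.
    move=> s; rewrite /S1 S1of_eq => hs.
    have [j ->] := In_map_ex _ _ _ hs; exact: decode_class.
  have hM : (0 < size S1)%N by rewrite /S1 S1of_eq size_map size_Lidx.
  have hcnt : (2 * size S1 <= 7 * count ispos S1)%N.
    rewrite /S1 S1of_eq size_map count_map.
    rewrite (eq_count (a2 := fun i => (S i).1.1)) //.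
    move=> j /=; exact: ispos_decode.
  have h0 : forall i j, (i < k)%N -> (j < d)%N -> Rabs (dotp d (o j) (W0 i)) <= r.
    move=> i' j hi' hj; apply: cs_unit => //; [exact: ortho_same| exact: hW0].
  have hsmall : INR k * (r + INR T1 * eta1) <= 1/4.
    have hkp : 1 <= INR k by rewrite -INR_1; apply: INR_leq.
    have hT1 := pos_INR T1.
    have hX : 0 < 4 * INR k * (INR T1 + 1) by nra.
    have hprod : eta1 * (4 * INR k * (INR T1 + 1)) <= 1.
      have := Rmult_le_compat_r _ _ _ (Rlt_le _ _ hX) heta.
      rewrite Rinv_l; lra.
    nra.
  have [B1 B2] := boundB d k T1 S1 a0 eta1 W0 o r i ho hd heta0 hcl hM hcnt ha0 h0
    (Rlt_le _ _ hr0) hsmall hi hwi hai t ht.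
  rewrite -/W in B1 B2.
  have [hw1 hw2] := hwi.
  have hINRt := pos_INR t.
  split; [|split].
  + rewrite dotp_sym in hw1; lra.
  + move=> j hj1 hj2; have := B2 j hj1 hj2.
    have := Rle_abs (dotp d (o j) (W0 i)); have := h0 i j hi hj2; lra.
  + move=> x y hin hy q hq.
    have hp : pvec d (W i) (x, y).1 = o 0%N.
      apply: pvec_pos => //; first exact: hcl.
        rewrite dotp_sym; rewrite dotp_sym in hw1; nra.
      move=> j hj1 hj2.
      rewrite dotp_sym [dotp d (W i) (o 0%N)]dotp_sym.
      have := B2 j (leq_trans (isT : (1 <= 2)%N) hj1) hj2.
      have := hw2 j hj1 hj2; rewrite dotp_sym [dotp d (W0 i) (o 0%N)]dotp_sym.
      nra.
    by rewrite /= in hp; rewrite hp.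
Qed.
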